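(* Let $N\ge1$, $m\ge2$, and consider discrete-time agents $x_i[k+1]=Ax_i[k]+Bu_i[k]$, $y_i[k]=Cx_i[k]$, $i=1,\dots,N$, with $A,B$ the $m$-th order integrator matrices and $C\in\mathbb{R}^{1\times m}$. Apply the protocol $$u_i[k]=K_4z_i[k]-\frac{1}{1+\sum_{j\in\mathcal{N}_i(\sigma[k])}\alpha^{ij}_{\sigma[k]}}\sum_{j\in\mathcal{N}_i(\sigma[k])}\alpha^{ij}_{\sigma[k]}K_5\big(z_i[k]-z_j[k]\big),$$ $$z_i[k+1]=(A+K_6C)z_i[k]+Bu_i[k]-K_6y_i[k],$$ where $K_4=(b_1,\,b_2-b_1,\,\dots,\,b_{m-1}-b_{m-2},\,1-b_{m-1})$, $K_5=(b_1,b_2,\dots,b_{m-1},1)$, $b_1,\dots,b_{m-1}\in\mathbb{R}$, and $K_6\in\mathbb{R}^{m\times1}$. Suppose that $\mathcal{G}_{\sigma[k]}$ is uniformly jointly quasi-strongly connected in the discrete-time sense, every eigenvalue of $A+K_6C$ has modulus strictly less than $1$, and every root of $s^{m-1}+b_{m-1}s^{m-2}+\cdots+b_2s+b_1=0$ has modulus strictly less than $1$. Then for all initial conditions $x_i[0],z_i[0]\in\mathbb{R}^m$ there exists $x^*\in\mathbb{R}^m$ such that $\lim_{k\to\infty}x_i[k]=x^*$ for all $i=1,\dots,N$.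
   Context: $A\in\mathbb{R}^{m\times m}$ has ones on the superdiagonal and zeros elsewhere; $B=(0,\dots,0,1)^T$. Graphs: nodes $v_1,\dots,v_N$; edge $e_{ij}$ from $v_j$ to $v_i$ means agent $i$ receives information from agent $j$; no self-edges; a finite index set $\mathcal{S}$ of digraphs, graph $\mathcal{G}_q$ having fixed weights $\alpha^{ij}_q>0$ on its edges ($0$ otherwise), $\mathcal{N}_i(q)=\{j:e_{ij}\in\mathcal{G}_q\}$; $\sigma:\{0,1,2,\dots\}\to\mathcal{S}$ is the switching sequence. A digraph is quasi-strongly connected if some node has a directed path (sequence of distinct nodes following edge directions) to every other node. $\mathcal{G}_{\sigma[k]}$ is uniformly jointly quasi-strongly connected in the discrete-time sense if there is an integer $M>0$ such that for every $k\ge0$ the graph with edge set $\bigcup_{i=k}^{k+M}\mathcal{E}(\mathcal{G}_{\sigma[i]})$ is quasi-strongly connected. *)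

(* Defs.v *)
From Stdlib Require Import Reals List.
Import ListNotations.
Open Scope R_scope.

Fixpoint rsum (n : nat) (f : nat -> R) : R :=
  match n with O => 0 | S n' => rsum n' f + f n' end.

(* Complex numbers as pairs (re, im). *)
Definition Cx : Type := (R * R)%type.
Definition C0 : Cx := (0, 0).
Definition Cofr (r : R) : Cx := (r, 0).
Definition Cadd (z w : Cx) : Cx := (fst z + fst w, snd z + snd w).
Definition Cmul (z w : Cx) : Cx :=
  (fst z * fst w - snd z * snd w, fst z * snd w + snd z * fst w).
Fixpoint Cpow (z : Cx) (n : nat) : Cx :=
  match n with O => (1, 0) | S n' => Cmul z (Cpow z n') end.
Fixpoint Csum (n : nat) (f : nat -> Cx) : Cx :=
  match n with O => C0 | S n' => Cadd (Csum n' f) (f n') end.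
Definition Cmod (z : Cx) : R := sqrt (fst z ^ 2 + snd z ^ 2).

(* Vectors in R^m: nat -> R (indices 0..m-1); matrices: nat -> nat -> R. *)
Definition dot (m : nat) (u v : nat -> R) : R := rsum m (fun p => u p * v p).
Definition mv (m : nat) (M : nat -> nat -> R) (v : nat -> R) (p : nat) : R :=
  rsum m (fun q => M p q * v q).

Definition is_eigenvalue (m : nat) (M : nat -> nat -> R) (lam : Cx) : Prop :=
  exists v : nat -> Cx,
    (exists p, (p < m)%nat /\ v p <> C0) /\
    forall p, (p < m)%nat ->
      Csum m (fun q => Cmul (Cofr (M p q)) (v q)) = Cmul lam (v p).

(* m-th order integrator: ones on the superdiagonal; B = e_m *)
Definition Aint (p q : nat) : R := if Nat.eqb q (S p) then 1 else 0.
Definition Bint (m p : nat) : R := if Nat.eqb p (m - 1) then 1 else 0.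

(* Gains, with b : nat -> R and b 1, ..., b (m-1) the parameters b_1..b_{m-1}.
   K4 = (b1, b2-b1, ..., b_{m-1}-b_{m-2}, 1-b_{m-1}),  K5 = (b1,...,b_{m-1},1). *)
Definition K5 (m : nat) (b : nat -> R) (p : nat) : R :=
  if Nat.eqb p (m - 1) then 1 else b (S p).
Definition K4 (m : nat) (b : nat -> R) (p : nat) : R :=
  K5 m b p - (if Nat.eqb p 0 then 0 else b p).

Definition bpoly (m : nat) (b : nat -> R) (s : Cx) : Cx :=
  Cadd (Cpow s (m - 1)) (Csum (m - 1) (fun i => Cmul (Cofr (b (S i))) (Cpow s i))).

(* Graphs: alpha q i j is the weight of edge e_ij (from v_j to v_i) in G_q,
   > 0 iff the edge is present, 0 otherwise.  Nodes are 0..N-1. *)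
Fixpoint is_walk (E : nat -> nat -> Prop) (l : list nat) : Prop :=
  match l with
  | x :: ((y :: _) as t) => E x y /\ is_walk E t
  | _ => True
  end.

(* directed path (sequence of distinct nodes) from a to b, E x y = edge from x to y *)
Definition dpath (N : nat) (E : nat -> nat -> Prop) (a b : nat) : Prop :=
  exists l : list nat,
    NoDup (a :: l) /\ Forall (fun v => (v < N)%nat) (a :: l) /\
    is_walk E (a :: l) /\ last (a :: l) a = b.

Definition quasi_strongly_connected (N : nat) (E : nat -> nat -> Prop) : Prop :=
  exists r, (r < N)%nat /\ forall t, (t < N)%nat -> t <> r -> dpath N E r t.

(* edge from v_j to v_i in the union of G_{sigma[l]}, l = k..k+M *)
Definition union_edge (alpha : nat -> nat -> nat -> R) (sigma : nat -> nat)
    (k M : nat) (j i : nat) : Prop :=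
  exists l, (k <= l <= k + M)%nat /\ alpha (sigma l) i j > 0.

Definition UJQSC (N : nat) (alpha : nat -> nat -> nat -> R) (sigma : nat -> nat) : Prop :=
  exists M : nat, (M > 0)%nat /\
    forall k : nat, quasi_strongly_connected N (union_edge alpha sigma k M).

(* Main.v *)
Require Import Defs.
From Stdlib Require Import Reals List Lra Lia.
From HB Require Import structures.
From mathcomp Require Import all_boot all_order all_algebra.
From mathcomp Require Import boolp Rstruct complex.
From mathcomp Require Import ring lra zify.
Import Order.TTheory GRing.Theory Num.Theory.
Local Open Scope ring_scope.
Ltac mc := rewrite ?RplusE ?RminusE ?RmultE ?RoppE ?RdivE ?RinvE ?R0E ?R1E ?IZRposE ?INRE /=.
Notation C := (complex R).
Definition nc (z : C) : R := @Normc.normc R z.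

Lemma nc_ge0 z : 0 <= nc z.
Proof. by case: z => a b; rewrite /nc /Normc.normc sqrtr_ge0. Qed.
Lemma ncD z w : nc (z + w) <= nc z + nc w.
Proof. exact: le_normcD. Qed.
Lemma ncM z w : nc (z * w) = nc z * nc w.
Proof. exact: Normc.normcM. Qed.
Lemma ncN z : nc (- z) = nc z.
Proof. exact: normcN. Qed.
Lemma ncR (x : R) : nc (x%:C)%C = `|x|.
Proof. by rewrite /nc /Normc.normc /= expr0n /= addr0 sqrtr_sqr. Qed.
Lemma nc_Re z : `|complex.Re z| <= nc z.
Proof.
case: z => a b; rewrite /nc /Normc.normc /=.
by rewrite -sqrtr_sqr ler_sqrt ?addr_ge0 ?sqr_ge0 // lerDl sqr_ge0.
Qed.
Lemma ncV z : nc (z^-1) = (nc z)^-1.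
Proof. exact: Normc.normcV. Qed.
Lemma nc0 : nc 0 = 0.
Proof. exact: Normc.normc0. Qed.
Lemma nc1 : nc 1 = 1.
Proof. exact: Normc.normc1. Qed.
Lemma nc_eq0 z : nc z = 0 -> z = 0.
Proof. exact: Normc.eq0_normc. Qed.
Lemma ncB z w : nc (z - w) = nc (w - z).
Proof. by rewrite -ncN opprB. Qed.

Definition summ (y : nat -> C) := exists B : R, forall n, \sum_(k < n) nc (y k) <= B.
Definition cvC (y : nat -> C) (c : C) :=
  forall eps : R, 0 < eps -> exists K, forall k, (K <= k)%N -> nc (y k - c) < eps.

Lemma sum_nc_ge0 (y : nat -> C) n : 0 <= \sum_(k < n) nc (y k).
Proof. by apply: sumr_ge0 => i _; apply: nc_ge0. Qed.

Lemma fo_summ (r : C) (v w : nat -> C) : nc r < 1 ->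
  (forall k, w k.+1 = r * w k + v k) -> summ v -> summ w.
Proof.
move=> hr hw [B hB].
have key : forall n, \sum_(k < n.+1) nc (w k) <=
   nc (w 0%N) + nc r * \sum_(k < n) nc (w k) + \sum_(k < n) nc (v k).
  elim=> [|n IH]; first by rewrite big_ord1 !big_ord0 mulr0 !addr0.
  rewrite big_ord_recr /= [X in _ <= _ + _ * X + _]big_ord_recr /=.
  rewrite [X in _ <= _ + X]big_ord_recr /= hw.
  apply: (le_trans (lerD IH (ncD _ _))); rewrite ncM mulrDr; lra.
exists ((nc (w 0%N) + B) / (1 - nc r)) => n.
have h1 : \sum_(k < n) nc (w k) <= \sum_(k < n.+1) nc (w k).
  by rewrite big_ord_recr /= lerDl nc_ge0.
have h2 := key n; have h3 := hB n.
have hr0 := nc_ge0 r.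
rewrite ler_pdivlMr ?subr_gt0 //.
set S := \sum_(k < n) nc (w k) in h1 h2 *.
set V := \sum_(k < n) nc (v k) in h2 h3.
have : S <= nc (w 0%N) + nc r * S + B by lra.
move=> h; rewrite mulrBr mulr1; lra.
Qed.

Lemma pow_small (q A eps : R) : 0 <= q -> q < 1 -> 0 <= A -> 0 < eps ->
  exists J, forall j, (J <= j)%N -> q ^+ j * A < eps.
Proof.
move=> q0 q1 A0 e0.
have hq : Rlt (Rabs q) 1.
  by apply/RltP; rewrite RabsE ger0_norm ?R1E.
have he : Rlt 0 (eps / (A + 1)) by apply/RltP; mc; rewrite divr_gt0 //; lra.
have [J HJ] := pow_lt_1_zero q hq _ he.
exists J => j /ssrnat.leP Hj; have := HJ j Hj.
rewrite RabsE RpowE => /RltP; rewrite ger0_norm ?exprn_ge0 // => h.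
have h' : q ^+ j * (A + 1) < eps by rewrite -ltr_pdivlMr //; lra.
have : q ^+ j * A <= q ^+ j * (A + 1) by rewrite ler_wpM2l ?exprn_ge0 //; lra.
lra.
Qed.

Lemma fo_cv (r : C) (v w : nat -> C) (c : C) : nc r < 1 ->
  (forall k, w k.+1 = r * w k + v k) -> cvC v c -> cvC w (c / (1 - r)).
Proof.
move=> hr hw hv.
have r1 : 1 - r != 0.
  apply/negP => /eqP h; move: hr; have -> : r = 1 by apply/eqP; rewrite -subr_eq0 -opprB h oppr0.
  by rewrite nc1 ltxx.
set a := c / (1 - r).
have ha : a = r * a + c.
  by rewrite /a; field.
move=> eps e0.
have q0 := nc_ge0 r.
have e1 : 0 < eps * (1 - nc r) / 2 by rewrite divr_gt0 // mulr_gt0 // subr_gt0.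
have [K HK] := hv _ e1.
have claim : forall j, nc (w (K + j)%N - a) <= nc r ^+ j * nc (w K - a) + eps / 2.
  elim=> [|j IH]; first by rewrite addn0 expr0 mul1r lerDl; lra.
  rewrite addnS hw.
  have -> : r * w (K + j)%N + v (K + j)%N - a = r * (w (K + j)%N - a) + (v (K + j)%N - c).
    by rewrite {1}ha; ring.
  apply: (le_trans (ncD _ _)); rewrite ncM.
  have := HK (K + j)%N (leq_addr _ _) => h.
  have : nc r * nc (w (K + j)%N - a) <= nc r * (nc r ^+ j * nc (w K - a) + eps / 2).
    by apply: ler_wpM2l.
  rewrite exprS; move: h; set X := nc (v (K + j)%N - c); set Y := nc (w (K + j)%N - a).
  set Z := nc r ^+ j * nc (w K - a) => h1 h2.
  have -> : nc r * nc r ^+ j * nc (w K - a) = nc r * Z by rewrite /Z mulrA.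
  have : nc r * (eps / 2) + eps * (1 - nc r) / 2 = eps / 2 by ring.
  lra.
have e2 : 0 < eps / 2 by rewrite divr_gt0.
have [J HJ] := pow_small (nc r) (nc (w K - a)) (eps / 2) q0 hr (nc_ge0 _) e2.
exists (K + J)%N => k hk.
have -> : k = (K + (k - K))%N by rewrite subnKC // (leq_trans (leq_addr _ _) hk).
apply: (le_lt_trans (claim _)).
have : nc r ^+ (k - K) * nc (w K - a) < eps / 2.
  by apply: HJ; rewrite leq_subRL ?(leq_trans (leq_addr _ _) hk).
lra.
Qed.

Definition appP (P : {poly C}) (y : nat -> C) (k : nat) : C :=
  \sum_(j < size P) P`_j * y (k + j)%N.

Lemma appP_ext (P : {poly C}) y k d :
  appP P y k = \sum_(j < size P + d) P`_j * y (k + j)%N.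
Proof.
elim: d => [|d IH]; first by rewrite addn0.
by rewrite addnS big_ord_recr /= -IH nth_default ?mul0r ?addr0 // leq_addr.
Qed.

Lemma appP_XsubC (Q : {poly C}) r y k : Q != 0 ->
  appP (Q * ('X - r%:P)) y k = appP Q y k.+1 - r * appP Q y k.
Proof.
move=> Q0.
have hs : size (Q * ('X - r%:P)) = (size Q).+1.
  by rewrite size_mul ?polyXsubC_eq0 // size_XsubC addn2.
rewrite /appP hs.
rewrite (eq_bigr (fun j : 'I_(size Q).+1 => (Q * 'X)`_j * y (k + j)%N - Q`_j * r * y (k + j)%N)); last first.
  by move=> j _; rewrite mulrBr coefB coefMC mulrBl.
rewrite sumrB big_ord_recl /= coefMX eqxx mul0r add0r.
rewrite [X in _ - X = _]big_ord_recr /= nth_default // mul0r mul0r addr0.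
rewrite mulr_sumr; congr (_ - _).
  by apply: eq_bigr => j _; rewrite coefMX /= /bump /= add1n addnS.
by apply: eq_bigr => j _; rewrite mulrCA mulrA.
Qed.

Lemma appP_const (P : {poly C}) y k : size P = 1%N -> appP P y k = P`_0 * y k.
Proof. by move=> h; rewrite /appP h big_ord1 addn0. Qed.

Lemma size1_coef0 (P : {poly C}) : size P = 1%N -> P`_0 != 0.
Proof.
move=> h; have : lead_coef P != 0 by rewrite lead_coef_eq0 -size_poly_eq0 h.
by rewrite /lead_coef h.
Qed.

Lemma factor_root (P : {poly C}) r : root P r ->
  P = (P %/ ('X - r%:P)) * ('X - r%:P).
Proof. by move=> hr; rewrite divpK // dvdp_XsubCl. Qed.

Lemma filt_summ n : forall (P : {poly C}) (y : nat -> C), size P = n.+1 ->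
  (forall z, root P z -> nc z < 1) -> summ (appP P y) -> summ y.
Proof.
elim: n => [|n IH] P y hs hroots hsum.
  have c0 := @size1_coef0 P hs.
  case: hsum => B hB; exists (nc (P`_0)^-1 * B) => n.
  have -> : \sum_(k < n) nc (y k) = nc (P`_0)^-1 * \sum_(k < n) nc (appP P y k).
    rewrite mulr_sumr; apply: eq_bigr => k _.
    by rewrite appP_const // -ncM mulrA mulVf // mul1r.
  by rewrite ler_wpM2l // nc_ge0.
have : size P != 1%N by rewrite hs.
case/closed_rootP => r hr.
set Q := P %/ ('X - r%:P).
have hP : P = Q * ('X - r%:P) by apply: factor_root.
have Q0 : Q != 0 by apply: contra_eq_neq hP => ->; rewrite mul0r -size_poly_eq0 hs.
have hsQ : size Q = n.+1.
  by move: hs; rewrite hP size_mul ?polyXsubC_eq0 // size_XsubC addn2 => -[].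
apply: (IH Q) => //.
  by move=> z hz; apply: hroots; rewrite hP rootM hz.
apply: (@fo_summ r (appP P y)) => //.
  by apply: hroots.
by move=> k; rewrite hP appP_XsubC //; ring.
Qed.

Lemma cvC_eq (y : nat -> C) a b : cvC y a -> a = b -> cvC y b.
Proof. by move=> h <-. Qed.

Lemma filt_cv n : forall (P : {poly C}) (y : nat -> C) (c : C), size P = n.+1 ->
  (forall z, root P z -> nc z < 1) -> cvC (appP P y) c -> cvC y (c / P.[1]).
Proof.
elim: n => [|n IH] P y c hs hroots hcv.
  have c0 := @size1_coef0 P hs.
  have hP : P = (P`_0)%:P by apply: size1_polyC; rewrite hs.
  rewrite [P in P.[1]]hP hornerC.
  move=> eps e0.
  have e1 : 0 < eps * nc (P`_0) by rewrite mulr_gt0 // lt_def nc_ge0 andbT;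
    apply/negP => /eqP /nc_eq0 /eqP; apply/negP.
  have [K HK] := hcv _ e1; exists K => k hk.
  have -> : y k - c / P`_0 = (P`_0)^-1 * (appP P y k - c).
    by rewrite appP_const //; field.
  rewrite ncM ncV; have := HK k hk.
  have np : 0 < nc (P`_0) by rewrite lt_def nc_ge0 andbT; apply/negP => /eqP /nc_eq0 /eqP; apply/negP.
  by move=> h; rewrite mulrC ltr_pdivrMr.
have : size P != 1%N by rewrite hs.
case/closed_rootP => r hr.
set Q := P %/ ('X - r%:P).
have hP : P = Q * ('X - r%:P) by apply: factor_root.
have Q0 : Q != 0 by apply: contra_eq_neq hP => ->; rewrite mul0r -size_poly_eq0 hs.
have hsQ : size Q = n.+1.
  by move: hs; rewrite hP size_mul ?polyXsubC_eq0 // size_XsubC addn2 => -[].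
have r1 : nc r < 1 by apply: hroots.
have hw := @fo_cv r (appP P y) (appP Q y) c r1.
have hQ1 : Q.[1] != 0.
  apply/negP => /eqP h; have : root P 1 by rewrite hP rootM /root h eqxx.
  by move/hroots; rewrite nc1 ltxx.
have r1' : 1 - r != 0.
  apply/negP => /eqP h; move: r1; have -> : r = 1 by apply/eqP; rewrite -subr_eq0 -opprB h oppr0.
  by rewrite nc1 ltxx.
apply: cvC_eq.
  apply: (IH Q) => //.
    by move=> z hz; apply: hroots; rewrite hP rootM hz.
  apply: hw => // k.
  by rewrite hP appP_XsubC //; ring.
rewrite hP hornerM hornerXsubC; field.
by rewrite hQ1 r1'.
Qed.

Lemma rsumE n (f : nat -> R) : rsum n f = \sum_(i < n) f i.
Proof. by elim: n => [|n IH]; rewrite ?big_ord0 //= big_ord_recr /= -IH. Qed.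

Definition toC (z : Cx) : C := complex.Complex z.1 z.2.
Definition fromC (c : C) : Cx := (complex.Re c, complex.Im c).
Lemma toCK c : toC (fromC c) = c. Proof. by case: c. Qed.
Lemma toC_inj z w : toC z = toC w -> z = w.
Proof. by case: z => a b; case: w => c d /= [-> ->]. Qed.
Lemma toC_add z w : toC (Cadd z w) = toC z + toC w. Proof. by []. Qed.
Lemma toC_mul z w : toC (Cmul z w) = toC z * toC w. Proof. by []. Qed.
Lemma toC_ofr r : toC (Cofr r) = (r%:C)%C. Proof. by []. Qed.
Lemma toC_C0 : toC C0 = 0. Proof. by []. Qed.
Lemma toC_pow z n : toC (Cpow z n) = toC z ^+ n.
Proof. by elim: n => [|n IH] //=; rewrite toC_mul IH exprS. Qed.
Lemma toC_sum n f : toC (Csum n f) = \sum_(i < n) toC (f i).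
Proof. by elim: n => [|n IH]; rewrite ?big_ord0 //= toC_add IH big_ord_recr. Qed.
Lemma Cmod_nc z : Cmod z = nc (toC z).
Proof. by case: z => a b; rewrite /Cmod RsqrtE !RpowE. Qed.

Definition MC m' (Mf : nat -> nat -> R) : 'M[C]_m'.+1 := \matrix_(i, j) ((Mf i j)%:C)%C.

Lemma horner_mx_sum m' (A : 'M[C]_m'.+1) (p : {poly C}) :
  horner_mx A p = \sum_(j < size p) p`_j *: A ^+ j.
Proof.
rewrite -[p in LHS]coefK poly_def rmorph_sum; apply: eq_bigr => j _.
rewrite -mul_polyC rmorphM /= horner_mx_C rmorphXn /= horner_mx_X; exact: mul_scalar_mx.
Qed.

Lemma CH_rec m' (Mf : nat -> nat -> R) (e : nat -> nat -> R) :
  (forall k p, (p < m'.+1)%N -> e k.+1 p = rsum m'.+1 (fun q => Mf p q * e k q)) ->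
  forall p k, (p < m'.+1)%N -> appP (char_poly (MC m' Mf)) (fun k => ((e k p)%:C)%C) k = 0.
Proof.
move=> he p k hp.
pose E k : 'cV[C]_m'.+1 := \col_(i < m'.+1) ((e k i)%:C)%C.
have hE : forall k, E k.+1 = MC m' Mf *m E k.
  move=> l; apply/matrixP => i j; rewrite !mxE he // rsumE.
  rewrite rmorph_sum; apply: eq_bigr => q _; by rewrite !mxE rmorphM.
have hEj : forall j, E (k + j)%N = (MC m' Mf) ^+ j *m E k.
  elim=> [|j IH]; first by rewrite addn0 expr0 mul1mx.
  by rewrite addnS hE IH exprS mulmxA.
have := Cayley_Hamilton (MC m' Mf); rewrite horner_mx_sum => hCH.
have : ((\sum_(j < size (char_poly (MC m' Mf))) (char_poly (MC m' Mf))`_j *: MC m' Mf ^+ j) *m E k) (Ordinal hp) 0 = 0.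
  by rewrite hCH mul0mx mxE.
rewrite mulmx_suml summxE => <-; apply: eq_bigr => j _.
by rewrite -scalemxAl -hEj !mxE.
Qed.

Lemma char_poly_tr n (A : 'M[C]_n) : char_poly A^T = char_poly A.
Proof.
rewrite /char_poly -det_tr; congr (\det _); apply/matrixP => i j.
by rewrite !mxE eq_sym.
Qed.

Lemma root_char_eig m' (Mf : nat -> nat -> R) a :
  root (char_poly (MC m' Mf)) a -> is_eigenvalue m'.+1 Mf (fromC a).
Proof.
rewrite -char_poly_tr -eigenvalue_root_char => /eigenvalueP [v hv v0].
pose vf q := fromC (v 0 (inord q)).
exists vf; split.
  have [j hj] : exists j, v 0 j != 0.
    have : ~~ [forall j, v 0 j == 0].
      apply: contra v0 => /forallP h; apply/eqP/matrixP => i j.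
      by rewrite (ord1 i) mxE; apply/eqP/h.
    by rewrite negb_forall => /existsP [j hj]; exists j.
  exists j; split; first by apply/ssrnat.ltP.
  move=> h; move: hj; have := congr1 toC h; rewrite /vf toCK toC_C0 inord_val => ->; by rewrite eqxx.
move=> p /ssrnat.ltP hp; apply: toC_inj.
rewrite toC_sum toC_mul /vf !toCK.
have := congr1 (fun M : 'rV[C]_m'.+1 => M 0 (inord p)) hv; rewrite /= !mxE => <-.
apply: eq_bigr => q _; rewrite toC_mul toC_ofr toCK inord_val !mxE mulrC.
by rewrite inordK.
Qed.

Set Implicit Arguments.
Unset Strict Implicit.
Definition wsum (N : nat) (a : nat -> nat -> nat -> R) k i : R := \sum_(j < N) a k i j.
Definition avg (N : nat) (a : nat -> nat -> nat -> R) (xi : nat -> nat -> R) k i :=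
  (xi i k + \sum_(j < N) a k i j * xi j k) / (1 + wsum N a k i).

Definition wgood (N : nat) (a : nat -> nat -> nat -> R) (dl : R) :=
  [/\ 0 < dl, dl <= 1, (forall k i j, 0 <= a k i j),
      (forall k i, (i < N)%N -> dl * (1 + wsum N a k i) <= 1) &
      (forall k i j, (i < N)%N -> (j < N)%N -> 0 < a k i j -> dl * (1 + wsum N a k i) <= a k i j)].

Definition cstep (N : nat) a (xi : nat -> nat -> R) (dd : nat -> R) :=
  forall k i, (i < N)%N -> `|xi i k.+1 - avg N a xi k i| <= dd k.

Definition psum (dd : nat -> R) k : R := \sum_(l < k) dd l.

Lemma psumS dd k : psum dd k.+1 = psum dd k + dd k.
Proof. by rewrite /psum big_ord_recr. Qed.

Lemma wsum_ge0 N a k i : (forall k i j, 0 <= a k i j) -> 0 <= wsum N a k i.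
Proof. by move=> h; apply: sumr_ge0 => j _. Qed.

Lemma avg_ub N a xi k i U : (forall k i j, 0 <= a k i j) ->
  (forall j, (j < N)%N -> xi j k <= U) -> (i < N)%N -> avg N a xi k i <= U.
Proof.
move=> ha hU hi; rewrite /avg.
have s0 := wsum_ge0 N k i ha.
have ps : 0 < 1 + wsum N a k i by lra.
rewrite ler_pdivrMr //.
have : \sum_(j < N) a k i j * xi j k <= \sum_(j < N) a k i j * U.
  by apply: ler_sum => j _; apply: ler_wpM2l => //; apply: hU.
rewrite -mulr_suml -/(wsum N a k i) => h.
have := hU i hi; lra.
Qed.

Lemma avg_gap N a xi k i U dl j0 : wgood N a dl ->
  (forall j, (j < N)%N -> xi j k <= U) -> (i < N)%N -> (j0 < N)%N ->
  (j0 = i \/ 0 < a k i j0) ->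
  dl * (U - xi j0 k) <= U - avg N a xi k i.
Proof.
case=> dl0 dl1 ha h1 h2 hU hi hj0 hj.
have s0 := wsum_ge0 N k i ha.
have h1i := h1 k i hi; have h2i := fun j hj hp => h2 k i j hi hj hp.
set s := wsum N a k i in s0 h1i h2i *.
have hT : 0 <= \sum_(j < N) a k i j * (U - xi j k).
  by apply: sumr_ge0 => j _; apply: mulr_ge0 => //; have := hU j (ltn_ord j); lra.
have eT : \sum_(j < N) a k i j * (U - xi j k) = U * s - \sum_(j < N) a k i j * xi j k.
  rewrite /s /wsum mulr_sumr -sumrB; apply: eq_bigr => j _; ring.
have num : dl * (U - xi j0 k) * (1 + s) <= (U - xi i k) + \sum_(j < N) a k i j * (U - xi j k).
  case: hj => [->|hpos].
    have := h1i; have := hU i hi; move=> hu hd.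
    have : dl * (U - xi i k) * (1 + s) = (dl * (1 + s)) * (U - xi i k) by ring.
    move=> ->; have : dl * (1 + s) * (U - xi i k) <= 1 * (U - xi i k).
      by apply: ler_wpM2r; lra.
    lra.
  have single : a k i j0 * (U - xi j0 k) <= \sum_(j < N) a k i j * (U - xi j k).
    rewrite (bigD1 (Ordinal hj0)) //= lerDl; apply: sumr_ge0 => j _.
    by apply: mulr_ge0 => //; have := hU j (ltn_ord j); lra.
  have := h2i j0 hj0 hpos; have := hU i hi; have := hU j0 hj0 => hu0 hui hd.
  have : dl * (U - xi j0 k) * (1 + s) = (dl * (1 + s)) * (U - xi j0 k) by ring.
  move=> ->; have : dl * (1 + s) * (U - xi j0 k) <= a k i j0 * (U - xi j0 k).
    by apply: ler_wpM2r; lra.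
  lra.
rewrite /avg -/s.
have ps : 0 < 1 + s by lra.
have -> : U - (xi i k + \sum_(j < N) a k i j * xi j k) / (1 + s) =
          ((U - xi i k) + \sum_(j < N) a k i j * (U - xi j k)) / (1 + s).
  rewrite eT; field; lra.
by rewrite ler_pdivlMr.
Qed.

Lemma avg_opp N a xi k i : avg N a (fun i k => - xi i k) k i = - avg N a xi k i.
Proof.
rewrite /avg -mulNr opprD; congr (_ * _); congr (_ + _); rewrite -sumrN.
by apply: eq_bigr => j _; rewrite mulrN.
Qed.

Lemma cstep_opp N a xi dd : cstep N a xi dd -> cstep N a (fun i k => - xi i k) dd.
Proof. by move=> h k i hi; rewrite avg_opp -opprD normrN; apply: h. Qed.

Lemma bounds_up N a xi dd dl k0 U : wgood N a dl -> cstep N a xi dd ->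
  (forall j, (j < N)%N -> xi j k0 <= U) ->
  forall d j, (j < N)%N -> xi j (k0 + d)%N <= U + (psum dd (k0 + d)%N - psum dd k0).
Proof.
case=> _ _ ha _ _ hs hU; elim=> [|d IH] j hj.
  by rewrite addn0 subrr addr0; apply: hU.
rewrite addnS psumS.
have := hs (k0 + d)%N j hj; have := avg_ub (k := (k0 + d)%N) (i := j) ha IH hj.
move=> h1 /ler_normlP [h2 h3]; lra.
Qed.

Lemma bounds_lo N a xi dd dl k0 L : wgood N a dl -> cstep N a xi dd ->
  (forall j, (j < N)%N -> L <= xi j k0) ->
  forall d j, (j < N)%N -> L - (psum dd (k0 + d)%N - psum dd k0) <= xi j (k0 + d)%N.
Proof.
move=> hw hs hL d j hj.
have h : forall j, (j < N)%N -> - xi j k0 <= - L by move=> j' hj'; rewrite lerN2; apply: hL.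
have := bounds_up (k0 := k0) (U := - L) hw (cstep_opp hs) h d hj.
lra.
Qed.

Inductive infl (N : nat) (a : nat -> nat -> nat -> R) (k0 c : nat) : nat -> nat -> Prop :=
| infl0 : (c < N)%N -> infl N a k0 c k0 c
| inflS k j i : infl N a k0 c k j -> (i < N)%N -> (j = i \/ 0 < a k i j) ->
    infl N a k0 c k.+1 i.

Lemma infl_le N a k0 c k i : infl N a k0 c k i -> (k0 <= k)%N.
Proof. by elim=> // k' j i' _ IH _ _; apply: leqW. Qed.

Lemma infl_lt N a k0 c k i : infl N a k0 c k i -> (c < N)%N /\ (i < N)%N.
Proof. by elim=> // k' j i' _ [IH _] hi _. Qed.

Lemma infl_stay N a k0 c d : (c < N)%N -> infl N a k0 c (k0 + d)%N c.
Proof.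
move=> hc; elim: d => [|d IH]; first by rewrite addn0; constructor.
by rewrite addnS; apply: (inflS IH) => //; left.
Qed.

Lemma infl_trans N a k0 c k1 j k2 i :
  infl N a k0 c k1 j -> infl N a k1 j k2 i -> infl N a k0 c k2 i.
Proof. by move=> h1; elim=> // k j' i' _ IH hi hj; apply: (inflS IH). Qed.

Lemma infl_same N a k0 c i : infl N a k0 c k0 i -> i = c.
Proof.
have : forall k, infl N a k0 c k i -> k = k0 -> i = c; last by move=> h /h; apply.
move=> k; case=> // k' j i' h _ _ e; have := infl_le h; rewrite -e ltnn.
by [].
Qed.

Lemma infl_bound N a xi dd dl k0 c k i U : wgood N a dl -> cstep N a xi dd ->
  (forall j, (j < N)%N -> xi j k0 <= U) -> infl N a k0 c k i ->
  dl ^+ (k - k0) * (U - xi c k0) <= U + (psum dd k - psum dd k0) - xi i k.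
Proof.
move=> hw hs hU; elim=> [hc|k' j i' h IH hi hj].
  by rewrite subnn expr0 mul1r subrr addr0.
have hk := infl_le h.
have hall : forall j, (j < N)%N -> xi j k' <= U + (psum dd k' - psum dd k0).
  by move=> j' hj'; have := bounds_up hw hs hU (k' - k0) hj'; rewrite subnKC.
have hjN := (infl_lt h).2.
have hg := avg_gap hw hall hi hjN hj.
have := hs k' i' hi => /ler_normlP [_ hst].
rewrite subSn // exprS psumS.
case: hw => dl0 _ _ _ _.
have : dl * (dl ^+ (k' - k0) * (U - xi c k0)) <= dl * (U + (psum dd k' - psum dd k0) - xi j k').
  by apply: ler_wpM2l => //; lra.
rewrite mulrA; lra.
Qed.

Lemma infl_bound_lo N a xi dd dl k0 c k i L : wgood N a dl -> cstep N a xi dd ->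
  (forall j, (j < N)%N -> L <= xi j k0) -> infl N a k0 c k i ->
  dl ^+ (k - k0) * (xi c k0 - L) <= xi i k - (L - (psum dd k - psum dd k0)).
Proof.
move=> hw hs hL hi.
have h : forall j, (j < N)%N -> - xi j k0 <= - L by move=> j hj; rewrite lerN2; apply: hL.
have := infl_bound hw (cstep_opp hs) h hi.
have -> : - L - - xi c k0 = xi c k0 - L by ring.
lra.
Qed.

Lemma last_dflt (l : list nat) b d d' : List.last (b :: l) d = List.last (b :: l) d'.
Proof. by elim: l b => [|c l IH] b //=; apply: IH. Qed.

Lemma walk_back N (E : nat -> nat -> Prop) (P : nat -> Prop) :
  (forall x y, (x < N)%coq_nat -> (y < N)%coq_nat -> E x y -> P y -> P x) ->
  forall l a, List.Forall (fun v => (v < N)%coq_nat) (a :: l) -> is_walk E (a :: l) ->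
  P (List.last (a :: l) a) -> P a.
Proof.
move=> hcl; elim=> [|b l IH] a hF hW hP //.
have [hEab hW'] : E a b /\ is_walk E (b :: l) by exact: hW.
inversion hF as [|? ? ha hF']; subst.
inversion hF' as [|? ? hb _]; subst.
apply: (hcl a b ha hb hEab); apply: IH => //.
by rewrite (last_dflt l b b a).
Qed.

Lemma qsc_root N E : quasi_strongly_connected N E ->
  exists r, (r < N)%coq_nat /\ forall P : nat -> Prop,
    (forall x y, (x < N)%coq_nat -> (y < N)%coq_nat -> E x y -> P y -> P x) ->
    (exists s, (s < N)%coq_nat /\ P s) -> P r.
Proof.
case=> r [hr hpath]; exists r; split => // P hcl [s [hs hPs]].
case: (PeanoNat.Nat.eq_dec s r) => [<-|hne] //.
have [l [_ [hF [hW hl]]]] := hpath s hs hne.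
by apply: (walk_back hcl hF hW); rewrite hl.
Qed.

Definition Nb N (E : nat -> nat -> Prop) (T : {set 'I_N}) : {set 'I_N} :=
  [set x : 'I_N | `[< exists y : 'I_N, y \in T /\ (x = y \/ E (x : nat) (y : nat)) >]].

Lemma Nb_sub N E (T : {set 'I_N}) : T \subset Nb E T.
Proof. by apply/subsetP => x hx; rewrite inE; apply/asboolP; exists x; split => //; left. Qed.

Lemma closed_of_Nb N E (S : {set 'I_N}) : Nb E S = S ->
  forall x y, (x < N)%coq_nat -> (y < N)%coq_nat -> E x y ->
  (exists o : 'I_N, (o : nat) = y /\ o \in S) -> (exists o : 'I_N, (o : nat) = x /\ o \in S).
Proof.
move=> hS x y /ssrnat.ltP hx /ssrnat.ltP hy hE [o [ho hoS]].
exists (Ordinal hx); split => //; rewrite -hS inE; apply/asboolP.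
by exists o; split => //; right; rewrite ho.
Qed.

Lemma grow N E (S S' : {set 'I_N}) : quasi_strongly_connected N E ->
  S != set0 -> S' != set0 -> S :&: S' = set0 -> Nb E S :&: Nb E S' = set0 ->
  (#|S :|: S'| < #|Nb E S :|: Nb E S'|)%N.
Proof.
move=> hq /set0Pn [s hs] /set0Pn [s' hs'] hd hdN.
rewrite ltnNge; apply/negP => hle.
move: hle; rewrite !cardsU hd hdN !cards0 !subn0 => hle.
have c1 := subset_leq_card (Nb_sub E S); have c2 := subset_leq_card (Nb_sub E S').
have e1 : Nb E S = S.
  apply/eqP; rewrite eq_sym eqEcard Nb_sub /=.
  by rewrite -(leq_add2r #|Nb E S'|); apply: (leq_trans hle); rewrite leq_add2l.
have e2 : Nb E S' = S'.
  apply/eqP; rewrite eq_sym eqEcard Nb_sub /=.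
  by rewrite -(leq_add2l #|Nb E S|); apply: (leq_trans hle); rewrite leq_add2r.
have [r [hr hroot]] := qsc_root hq.
have h1 := hroot _ (closed_of_Nb e1) (ex_intro _ (s : nat) (conj (ssrnat.ltP (ltn_ord s)) (ex_intro _ s (conj erefl hs)))).
have h2 := hroot _ (closed_of_Nb e2) (ex_intro _ (s' : nat) (conj (ssrnat.ltP (ltn_ord s')) (ex_intro _ s' (conj erefl hs')))).
case: h1 => o [ho hoS]; case: h2 => o' [ho' hoS'].
have : o \in S :&: S' by rewrite inE hoS /=; have -> : o = o' by apply: val_inj; rewrite /= ho ho'.
by rewrite hd inE.
Qed.

Lemma window_infl (N : nat) (a : nat -> nat -> nat -> R) (M k x y : nat) :
  (exists l, (le k l /\ le l (k + M)%N) /\ 0 < a l y x) ->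
  (x < N)%N -> (y < N)%N -> infl N a k x (k + M.+1)%N y.
Proof.
move=> [l [[/ssrnat.leP h1 /ssrnat.leP h2] hpos]] hx hy.
have s1 : infl N a k x l x by have := infl_stay a k (l - k) hx; rewrite subnKC.
have s2 : infl N a k x l.+1 y by apply: (inflS s1) => //; right.
have s3 : infl N a l.+1 y (k + M.+1)%N y.
  have := infl_stay a l.+1 (k + M.+1 - l.+1) hy; rewrite subnKC //; lia.
exact: infl_trans s2 s3.
Qed.

Definition Ewin (a : nat -> nat -> nat -> R) (M k : nat) (x y : nat) : Prop :=
  exists l, (le k l /\ le l (k + M)%N) /\ 0 < a l y x.

Lemma scramble N a M :
  (forall k, quasi_strongly_connected N (Ewin a M k)) ->
  forall k0 i i', (i < N)%N -> (i' < N)%N ->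
  exists c, infl N a k0 c (k0 + N.-1 * M.+1)%N i /\ infl N a k0 c (k0 + N.-1 * M.+1)%N i'.
Proof.
move=> hq k0 i i' hi hi'.
set T := N.-1.
have hN : N = T.+1 by rewrite /T prednK // (leq_ltn_trans (leq0n i) hi).
set kend := (k0 + T * M.+1)%N.
pose s t := (k0 + (T - t) * M.+1)%N.
have hs0 : forall t, (t <= T)%N -> (s t + t * M.+1)%N = kend.
  by move=> t ht; rewrite /s /kend -addnA -mulnDl subnK.
have hs1 : forall t, (t < T)%N -> (s t.+1 + M.+1)%N = s t.
  move=> t ht; rewrite /s -addnA; congr (_ + _)%N.
  by rewrite -{2}(mul1n M.+1) -mulnDl addn1 subnSK.
pose A (j : nat) t := [set c : 'I_N | `[< infl N a (s t) c kend j >]].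
have nonempty : forall j (hj : (j < N)%N) t, (t <= T)%N -> Ordinal hj \in A j t.
  move=> j hj t ht; rewrite inE; apply/asboolP => /=.
  by rewrite -(hs0 t ht); apply: infl_stay.
have incl : forall j t, (t < T)%N -> Nb (Ewin a M (s t.+1)) (A j t) \subset A j t.+1.
  move=> j t ht; apply/subsetP => x; rewrite !inE => /asboolP [y [hy hxy]].
  move: hy; rewrite inE => /asboolP hy; apply/asboolP.
  case: hxy => [->|hE].
    apply: infl_trans hy; rewrite -(hs1 t ht); apply: infl_stay.
    exact: ltn_ord.
  apply: infl_trans hy; rewrite -(hs1 t ht); apply: window_infl => //; exact: ltn_ord.
have claim : forall t, (t <= T)%N ->
    (A i t :&: A i' t != set0) \/ (t.+2 <= #|A i t :|: A i' t|)%N.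
  elim=> [_|t IH ht].
    case: (eqVneq i i') => [e|ne].
      subst i'; left; apply/set0Pn; exists (Ordinal hi); by rewrite inE !nonempty.
    right.
    have h2 : [set Ordinal hi; Ordinal hi'] \subset A i 0 :|: A i' 0.
      apply/subsetP => x; rewrite in_set2 => /orP [] /eqP ->; rewrite in_setU nonempty ?orbT //.
    have := subset_leq_card h2; rewrite cards2.
    by have -> : (Ordinal hi != Ordinal hi') = true by apply/eqP => /(congr1 val) /= /eqP; rewrite (negbTE ne).
  have htT : (t < T)%N by [].
  have sub1 : forall j, A j t \subset A j t.+1.
    by move=> j; apply: subset_trans (Nb_sub _ _) (incl j t htT).
  case: (IH (ltnW ht)) => [hne|hcard].
    left; case/set0Pn: hne => c; rewrite inE => /andP [h1 h2].
    apply/set0Pn; exists c; rewrite inE (subsetP (sub1 i) _ h1) (subsetP (sub1 i') _ h2) //.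
  case: (eqVneq (A i t :&: A i' t) set0) => [hd|hnd]; last first.
    left; case/set0Pn: hnd => c; rewrite inE => /andP [h1 h2].
    apply/set0Pn; exists c; rewrite inE (subsetP (sub1 i) _ h1) (subsetP (sub1 i') _ h2) //.
  set E := Ewin a M (s t.+1).
  case: (eqVneq (Nb E (A i t) :&: Nb E (A i' t)) set0) => [hdN|hndN]; last first.
    left; case/set0Pn: hndN => c; rewrite inE => /andP [h1 h2].
    apply/set0Pn; exists c; rewrite inE (subsetP (incl i t htT) _ h1) (subsetP (incl i' t htT) _ h2) //.
  right.
  have ne1 : A i t != set0 by apply/set0Pn; exists (Ordinal hi); apply: nonempty; exact: ltnW.
  have ne2 : A i' t != set0 by apply/set0Pn; exists (Ordinal hi'); apply: nonempty; exact: ltnW.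
  have hg := grow (hq (s t.+1)) ne1 ne2 hd hdN.
  have hsub : Nb E (A i t) :|: Nb E (A i' t) \subset A i t.+1 :|: A i' t.+1.
    by apply: setUSS; apply: incl.
  have := subset_leq_card hsub.
  move: hcard hg; set u := #|A i t :|: A i' t|; set v := #|Nb E (A i t) :|: Nb E (A i' t)|.
  set w := #|A i t.+1 :|: A i' t.+1|; move=> h1 h2 h3.
  apply: (leq_trans _ h3); apply: (leq_trans _ h2); by rewrite ltnS.
case: (claim T (leqnn T)) => [hne|hcard].
  case/set0Pn: hne => c; rewrite inE => /andP []; rewrite !inE => /asboolP h1 /asboolP h2.
  exists c; move: h1 h2; rewrite /s subnn mul0n addn0; by split.
exfalso; move: hcard; have := max_card (pred_of_set (A i T :|: A i' T)).
rewrite card_ord => h1 h2.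
by have := leq_trans h2 h1; rewrite hN ltnn.
Qed.

Definition cvR (u : nat -> R) (l : R) :=
  forall eps, 0 < eps -> exists K, forall k, (K <= k)%N -> `|u k - l| < eps.

Lemma cvR_Un u l : cvR u l -> Un_cv u l.
Proof.
move=> h eps /RltP he; have [K HK] := h eps he; exists K => n /ssrnat.leP hn.
by apply/RltP; rewrite RdistE; apply: HK.
Qed.

Lemma Un_cvR u l : Un_cv u l -> cvR u l.
Proof.
move=> h eps he; have he' : Rgt eps 0 by apply/RltP.
have [K HK] := h eps he'; exists K => n hn.
by have := HK n (ssrnat.leP hn); rewrite RdistE => /RltP.
Qed.

Lemma cv_of_dec (g : nat -> R) lb : (forall k, g k.+1 <= g k) -> (forall k, lb <= g k) ->
  exists l, cvR g l.
Proof.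
move=> hd hl.
have hD : Un_decreasing g by move=> n; apply/RleP; apply: hd.
have hB : has_lb g.
  exists (- lb) => x [i ->]; apply/RleP; rewrite /opp_seq RoppE lerN2; apply: hl.
have [l hl'] := decreasing_cv g hD hB; exists l; exact: Un_cvR.
Qed.

Lemma cv_of_inc (g : nat -> R) ub : (forall k, g k <= g k.+1) -> (forall k, g k <= ub) ->
  exists l, cvR g l /\ forall k, g k <= l.
Proof.
move=> hd hl.
have hD : Un_growing g by move=> n; apply/RleP; apply: hd.
have hB : has_ub g by exists ub => x [i ->]; apply/RleP; apply: hl.
have [l hl'] := growing_cv g hD hB; exists l; split; first exact: Un_cvR.
by move=> k; apply/RleP; apply: growing_ineq.
Qed.

Fixpoint fmax (f : nat -> R) n := if n is n'.+1 then Num.max (fmax f n') (f n') else f 0%N.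

Lemma fmax_ub f n j : (j < n)%N -> f j <= fmax f n.
Proof.
elim: n => // n IH; rewrite ltnS leq_eqVlt => /orP [/eqP ->|hj] /=.
  by rewrite le_max lexx orbT.
by rewrite le_max IH.
Qed.

Lemma fmax_att f n : (0 < n)%N -> exists j, (j < n)%N /\ fmax f n = f j.
Proof.
elim: n => // n IH _; case: n IH => [|n] IH.
  by exists 0%N; split => //=; rewrite maxxx.
have [j [hj ej]] := IH erefl.
rewrite /= -/(fmax f n.+1) maxEle; case: ifP => _.
  by exists n.+1.
by exists j; split => //; apply: ltnW.
Qed.

Definition fmin (f : nat -> R) n := - fmax (fun j => - f j) n.

Lemma fmin_lb f n j : (j < n)%N -> fmin f n <= f j.
Proof. by move=> hj; rewrite /fmin lerNl; apply: (fmax_ub (fun j => - f j)). Qed.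

Lemma fmin_att f n : (0 < n)%N -> exists j, (j < n)%N /\ fmin f n = f j.
Proof.
move=> hn; have [j [hj ej]] := fmax_att (fun j => - f j) hn.
by exists j; split => //; rewrite /fmin ej opprK.
Qed.

Lemma psum_ge0 dd k : (forall k, 0 <= dd k) -> 0 <= psum dd k.
Proof. by move=> h; apply: sumr_ge0 => l _. Qed.

Lemma psum_mono dd k d : (forall k, 0 <= dd k) -> psum dd k <= psum dd (k + d)%N.
Proof.
move=> h; elim: d => [|d IH]; first by rewrite addn0.
by rewrite addnS psumS; have := h (k + d)%N; lra.
Qed.

Lemma contract N a xi dd dl M : wgood N a dl -> cstep N a xi dd ->
  (forall k, quasi_strongly_connected N (Ewin a M k)) ->
  forall k0 U Lo, (forall j, (j < N)%N -> xi j k0 <= U) -> (forall j, (j < N)%N -> Lo <= xi j k0) ->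
  forall i i', (i < N)%N -> (i' < N)%N ->
  xi i (k0 + N.-1 * M.+1)%N - xi i' (k0 + N.-1 * M.+1)%N <=
    (1 - dl ^+ (N.-1 * M.+1)) * (U - Lo) +
    2 * (psum dd (k0 + N.-1 * M.+1)%N - psum dd k0).
Proof.
move=> hw hs hq k0 U Lo hU hL i i' hi hi'.
have [c [h1 h2]] := scramble hq k0 hi hi'.
have b1 := infl_bound hw hs hU h1; have b2 := infl_bound_lo hw hs hL h2.
move: b1 b2; rewrite addKn.
set p := dl ^+ (N.-1 * M.+1); move=> b1 b2.
have : p * (U - xi c k0) + p * (xi c k0 - Lo) = p * (U - Lo) by ring.
lra.
Qed.

Lemma consensus N a xi dd dl M B : (0 < N)%N -> wgood N a dl -> cstep N a xi dd ->
  (forall k, 0 <= dd k) -> (forall n, psum dd n <= B) ->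
  (forall k, quasi_strongly_connected N (Ewin a M k)) ->
  exists Lim, forall i, (i < N)%N -> cvR (fun k => xi i k) Lim.
Proof.
move=> hN hw hs hdd hB hq.
set L := (N.-1 * M.+1)%N.
set S := psum dd.
pose mx k := fmax (fun j => xi j k) N.
pose mn k := fmin (fun j => xi j k) N.
have hmx : forall k j, (j < N)%N -> xi j k <= mx k by move=> k j hj; apply: (fmax_ub (fun j => xi j k)).
have hmn : forall k j, (j < N)%N -> mn k <= xi j k by move=> k j hj; apply: (fmin_lb (fun j => xi j k)).
have hV0 : forall k, 0 <= mx k - mn k.
  by move=> k; have := hmx k 0%N hN; have := hmn k 0%N hN; lra.
have hF3 : forall k d, mx (k + d)%N - mn (k + d)%N <= mx k - mn k + 2 * (S (k + d)%N - S k).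
  move=> k d.
  have [j1 [hj1 e1]] := fmax_att (fun j => xi j (k + d)%N) hN.
  have [j2 [hj2 e2]] := fmin_att (fun j => xi j (k + d)%N) hN.
  have -> : mx (k + d)%N = xi j1 (k + d)%N by rewrite /mx e1.
  have -> : mn (k + d)%N = xi j2 (k + d)%N by rewrite /mn e2.
  have := bounds_up hw hs (hmx k) d hj1; have := bounds_lo hw hs (hmn k) d hj2.
  rewrite -/S; lra.
have hF4 : forall k, mx k.+1 <= mx k + dd k.
  move=> k; have [j1 [hj1 e1]] := fmax_att (fun j => xi j k.+1) hN.
  have -> : mx k.+1 = xi j1 k.+1 by rewrite /mx e1.
  have := bounds_up hw hs (hmx k) 1 hj1.
  by rewrite addn1 psumS; lra.
have hF2 : forall k, mx (k + L)%N - mn (k + L)%N <=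
    (1 - dl ^+ L) * (mx k - mn k) + 2 * (S (k + L)%N - S k).
  move=> k.
  have [j1 [hj1 e1]] := fmax_att (fun j => xi j (k + L)%N) hN.
  have [j2 [hj2 e2]] := fmin_att (fun j => xi j (k + L)%N) hN.
  have -> : mx (k + L)%N = xi j1 (k + L)%N by rewrite /mx e1.
  have -> : mn (k + L)%N = xi j2 (k + L)%N by rewrite /mn e2.
  exact: (contract hw hs hq (hmx k) (hmn k) hj1 hj2).
case: (hw) => dl0 dl1 _ _ _.
set rho := 1 - dl ^+ L.
have rho0 : 0 <= rho by rewrite /rho subr_ge0 exprn_ile1 // ltW.
have rho1 : rho < 1 by rewrite /rho; have := exprn_gt0 L dl0; lra.
have [lS [hScv hSle]] : exists l, cvR S l /\ forall k, S k <= l.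
  apply: (cv_of_inc (ub := B)) => // k; rewrite /S psumS; have := hdd k; lra.
have tail : forall eps, 0 < eps -> exists K, forall k, (K <= k)%N -> S k - S K <= eps.
  move=> eps he; have [K HK] := hScv eps he; exists K => k hk.
  have := HK K (leqnn K) => /ltr_normlP [h1 h2]; have := hSle k; lra.
have hVz : forall eps, 0 < eps -> exists K, forall k, (K <= k)%N -> mx k - mn k < eps.
  move=> eps he.
  case: (posnP L) => [L0|Lpos].
    exists 0%N => k _; have := hF2 k; rewrite /rho L0 expr0 subrr mul0r add0r addn0 subrr mulr0.
    lra.
  have he4 : 0 < eps / 4 by rewrite divr_gt0.
  have [K HK] := tail _ he4.
  have iter : forall n, mx (K + n * L)%N - mn (K + n * L)%N <=
                 rho ^+ n * (mx K - mn K) + 2 * (S (K + n * L)%N - S K).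
    elim=> [|n IH]; first by rewrite mul0n addn0 expr0 mul1r subrr mulr0 addr0.
    have -> : (K + n.+1 * L)%N = ((K + n * L) + L)%N by rewrite mulSn addnA addnAC.
    apply: (le_trans (hF2 _)).
    have hSm : 0 <= S (K + n * L)%N - S K by have := psum_mono K (n * L) hdd; rewrite -/S; lra.
    have : rho * (mx (K + n * L)%N - mn (K + n * L)%N) <=
           rho * (rho ^+ n * (mx K - mn K) + 2 * (S (K + n * L)%N - S K)).
      by apply: ler_wpM2l.
    have : rho * (2 * (S (K + n * L)%N - S K)) <= 1 * (2 * (S (K + n * L)%N - S K)).
      by apply: ler_wpM2r; [lra | exact: ltW].
    rewrite exprS; have -> : rho * rho ^+ n * (mx K - mn K) = rho * (rho ^+ n * (mx K - mn K)) by ring.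
    rewrite -/rho; lra.
  have he2 : 0 < eps / 2 by rewrite divr_gt0.
  have [J HJ] := pow_small rho (mx K - mn K) (eps / 2) rho0 rho1 (hV0 K) he2.
  exists (K + J * L)%N => k hk.
  have hKk : (K <= k)%N by apply: leq_trans hk; apply: leq_addr.
  set n := ((k - K) %/ L)%N.
  set r := ((k - K) %% L)%N.
  have ek : k = ((K + n * L) + r)%N by rewrite -addnA /n /r -divn_eq subnKC.
  have hn : (J <= n)%N.
    rewrite /n -(mulnK J Lpos); apply: leq_div2r; rewrite leq_subRL //.
  have h1 := hF3 (K + n * L)%N r; rewrite -ek in h1.
  have h2 := iter n.
  have h3 := HJ n hn; move: h3; mc => h3.
  have h4 := HK k hKk.
  lra.
pose g k := mx k - S k.
have [lg hg] : exists l, cvR g l.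
  apply: (cv_of_dec (lb := mn 0%N - B - B)).
    by move=> k; rewrite /g /S psumS; have := hF4 k; lra.
  move=> k; rewrite /g.
  have := bounds_lo hw hs (hmn 0%N) k (j := 0%N) hN; rewrite add0n.
  have := hmn k 0%N hN; have := hmx k 0%N hN; have := hB k.
  have : psum dd 0 = 0 by rewrite /psum big_ord0.
  rewrite -/S; lra.
exists (lg + lS) => i hi eps he.
have he3 : 0 < eps / 3 by rewrite divr_gt0.
have [K1 HK1] := hg _ he3; have [K2 HK2] := hScv _ he3; have [K3 HK3] := hVz _ he3.
exists (maxn K1 (maxn K2 K3)) => k hk.
have hk1 : (K1 <= k)%N by apply: leq_trans hk; apply: leq_maxl.
have hk2 : (K2 <= k)%N by apply: leq_trans hk; apply: leq_trans (leq_maxr _ _); apply: leq_maxl.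
have hk3 : (K3 <= k)%N by apply: leq_trans hk; apply: leq_trans (leq_maxr _ _); apply: leq_maxr.
have := HK1 k hk1 => /ltr_normlP [a1 a2].
have := HK2 k hk2 => /ltr_normlP [b1 b2].
have := HK3 k hk3 => c1.
have := hmx k i hi; have := hmn k i hi; rewrite /g in a1 a2 => d1 d2.
apply/ltr_normlP; split; lra.
Qed.

Lemma eqbE (a b : nat) : Nat.eqb a b = (a == b).
Proof. by case: (PeanoNat.Nat.eqb_spec a b) => [->|h]; [rewrite eqxx | apply/esym/eqP]. Qed.

Lemma dotE m f v : dot m f v = \sum_(p < m) f p * v p.
Proof. exact: rsumE. Qed.

Lemma mvE m M v p : mv m M v p = \sum_(q < m) M p q * v q.
Proof. exact: rsumE. Qed.

Lemma mvA m' v p : (p < m'.+1)%N ->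
  mv m'.+1 Aint v p = if (p < m')%N then v p.+1 else 0.
Proof.
move=> hp; rewrite mvE; case: ifP => hpm.
  have hq : (p.+1 < m'.+1)%N by [].
  rewrite (bigD1 (Ordinal hq)) //= /Aint eqbE eqxx mul1r big1 ?addr0 //.
  move=> q hq'; rewrite /Aint eqbE; case: eqP => [e|]; last by rewrite mul0r.
  have eq : q = Ordinal hq by apply: val_inj.
  by rewrite eq eqxx in hq'.
rewrite big1 // => q _; rewrite /Aint eqbE; case: eqP => [e|]; last by rewrite mul0r.
have := ltn_ord q; rewrite e ltnS => h; by rewrite h in hpm.
Qed.

Lemma K5E m' b p : K5 m'.+1 b p = if p == m' then 1 else b p.+1.
Proof. by rewrite /K5 /= PeanoNat.Nat.sub_0_r eqbE. Qed.

Lemma K4E m' b p : K4 m'.+1 b p = K5 m'.+1 b p - (if p == 0%N then 0 else b p).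
Proof. by rewrite /K4 eqbE. Qed.

Definition Wb m' (b : nat -> R) (v : nat -> R) :=
  \sum_(p < m'.+1) (if (p : nat) == 0%N then 0 else b p) * v p.

Lemma K5_mvA m' b v :
  \sum_(p < m'.+1) K5 m'.+1 b p * mv m'.+1 Aint v p = Wb m' b v.
Proof.
rewrite big_ord_recr /= mvA // ltnn mulr0 addr0 /Wb big_ord_recl /= mul0r add0r.
apply: eq_bigr => p _; rewrite mvA /=; last by apply: (leq_trans (ltn_ord p)).
rewrite ltn_ord K5E (ltn_eqF (ltn_ord p)) /bump /=.
by rewrite add1n.
Qed.

Lemma K5_Bint m' b w : \sum_(p < m'.+1) K5 m'.+1 b p * (Bint m'.+1 p * w) = w.
Proof.
rewrite big_ord_recr /= big1 ?add0r.
  by rewrite /Bint /= PeanoNat.Nat.sub_0_r eqbE eqxx K5E eqxx !mul1r.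
move=> p _; rewrite /Bint /= PeanoNat.Nat.sub_0_r eqbE (ltn_eqF (ltn_ord p)).
by rewrite mul0r mulr0.
Qed.

Lemma K4_dot m' b v : dot m'.+1 (K4 m'.+1 b) v = dot m'.+1 (K5 m'.+1 b) v - Wb m' b v.
Proof.
rewrite !dotE /Wb -sumrB; apply: eq_bigr => p _; rewrite K4E; ring.
Qed.

Lemma dotB m f v w : dot m f (fun p => v p - w p) = dot m f v - dot m f w.
Proof. rewrite !dotE -sumrB; apply: eq_bigr => p _; ring. Qed.

Lemma WbB m' b v w : Wb m' b (fun p => v p - w p) = Wb m' b v - Wb m' b w.
Proof. rewrite /Wb -sumrB; apply: eq_bigr => p _; ring. Qed.

Lemma dot_bound m f v Kf : (forall p, (p < m)%N -> `|f p| <= Kf) ->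
  `|dot m f v| <= Kf * \sum_(p < m) `|v p|.
Proof.
move=> hf; rewrite dotE mulr_sumr; apply: (le_trans (ler_norm_sum _ _ _)).
apply: ler_sum => p _; rewrite normrM; apply: ler_wpM2r => //; apply: hf; exact: ltn_ord.
Qed.

Lemma single_le n (f : nat -> R) i : (forall j, 0 <= f j) -> (i < n)%N -> f i <= \sum_(j < n) f j.
Proof.
move=> h hi; rewrite (bigD1 (Ordinal hi)) //= lerDl; apply: sumr_ge0 => j _; exact: h.
Qed.


Lemma wavg_bound N (al t : nat -> R) T : (forall j, 0 <= al j) -> 0 <= T ->
  (forall j, (j < N)%N -> `|t j| <= T) ->
  `|(1 + \sum_(j < N) al j)^-1 * \sum_(j < N) (al j * t j)| <= T.
Proof.
move=> ha hT ht.
have s0 : 0 <= \sum_(j < N) al j by apply: sumr_ge0.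
have h1 : `|\sum_(j < N) (al j * t j)| <= (\sum_(j < N) al j) * T.
  rewrite mulr_suml; apply: (le_trans (ler_norm_sum _ _ _)); apply: ler_sum => j _.
  rewrite normrM ger0_norm //; apply: ler_wpM2l => //; apply: ht; exact: ltn_ord.
have pi : 0 < 1 + \sum_(j < N) al j by lra.
have pi' : 0 <= (1 + \sum_(j < N) al j)^-1 by rewrite invr_ge0; lra.
rewrite normrM (ger0_norm pi') mulrC ler_pdivrMr //.
lra.
Qed.

Lemma fin_lb (n : nat) (P : nat -> R -> Prop) :
  (forall t c c', 0 < c' -> c' <= c -> P t c -> P t c') ->
  (forall t, (t < n)%N -> exists c, 0 < c /\ P t c) -> exists c, 0 < c /\ forall t, (t < n)%N -> P t c.
Proof.
move=> hm; elim: n => [|n IH] h; first by exists 1; split => //; lra.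
have [c1 [c10 hc1]] := IH (fun t ht => h t (ltnW ht)).
have [c2 [c20 hc2]] := h n (ltnSn n).
exists (Num.min c1 c2); split; first by rewrite lt_min c10 c20.
move=> t; rewrite ltnS leq_eqVlt => /orP [/eqP ->|ht].
  by apply: (hm _ c2) => //; [rewrite lt_min c10 c20 | rewrite ge_min lexx orbT].
by apply: (hm _ c1) => //; [rewrite lt_min c10 c20 | rewrite ge_min lexx | apply: hc1].
Qed.

Lemma is_walk_mono (E E' : nat -> nat -> Prop) : (forall x y, E x y -> E' x y) ->
  forall l, is_walk E l -> is_walk E' l.
Proof.
move=> h; elim=> [|a l IH] //=; case: l IH => [|b l] IH //= [h1 h2]; split; first exact: h.
exact: IH.
Qed.

Lemma qsc_mono N (E E' : nat -> nat -> Prop) : (forall x y, E x y -> E' x y) ->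
  quasi_strongly_connected N E -> quasi_strongly_connected N E'.
Proof.
move=> h [r [hr hp]]; exists r; split => // t ht hne.
have [l [h1 [h2 [h3 h4]]]] := hp t ht hne; exists l; split => //; split => //; split => //.
exact: is_walk_mono h3.
Qed.

Lemma summ_sum n (f : nat -> nat -> R) :
  (forall t, (t < n)%N -> exists B, forall K, \sum_(k < K) f t k <= B) ->
  exists B, forall K, \sum_(k < K) \sum_(t < n) f t k <= B.
Proof.
elim: n => [|n IH] h.
  by exists 0 => K; rewrite big1 // => k _; rewrite big_ord0.
have [B1 hB1] := IH (fun t ht => h t (ltnW ht)).
have [B2 hB2] := h n (ltnSn n).
exists (B1 + B2) => K.
rewrite (eq_bigr (fun k : 'I_K => \sum_(t < n) f t k + f n k)); last by move=> k _; rewrite big_ord_recr.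
by rewrite big_split /=; apply: lerD; [apply: hB1 | apply: hB2].
Qed.

Lemma shift_x (m' : nat) (xx : nat -> nat -> R) (uu : nat -> R) :
  (forall k p, (p < m'.+1)%N -> xx (S k) p = mv m'.+1 Aint (xx k) p + Bint m'.+1 p * uu k) ->
  forall p k, (p < m'.+1)%N -> xx k p = xx (k + p)%N 0%N.
Proof.
move=> hx; elim=> [|p IH] k hp; first by rewrite addn0.
have hp' : (p < m'.+1)%N by apply: ltnW.
have hp2 : (p < m')%N by rewrite -ltnS.
have := hx k p hp'; rewrite mvA // hp2 /Bint /= PeanoNat.Nat.sub_0_r eqbE (ltn_eqF hp2) mul0r addr0.
by move=> <-; rewrite IH // addSnnS.
Qed.

Definition Pb m' (b : nat -> R) : {poly C} :=
  \poly_(j < m'.+1) (if j == m' then 1 else ((b j.+1)%:C)%C).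

Lemma size_Pb m' b : size (Pb m' b) = m'.+1.
Proof. by rewrite size_poly_eq // eqxx oner_eq0. Qed.

Lemma Pb_horner m' b s : toC (bpoly m'.+1 b s) = (Pb m' b).[toC s].
Proof.
rewrite /bpoly /= PeanoNat.Nat.sub_0_r toC_add toC_pow toC_sum horner_poly big_ord_recr /= eqxx mul1r addrC.
congr (_ + _); apply: eq_bigr => j _; rewrite (ltn_eqF (ltn_ord j)) toC_mul toC_ofr toC_pow.
by [].
Qed.

Lemma appP_Pb m' b (y : nat -> C) k :
  appP (Pb m' b) y k = \sum_(p < m'.+1) ((K5 m'.+1 b p)%:C)%C * y (k + p)%N.
Proof.
rewrite /appP size_Pb; apply: eq_bigr => p _; rewrite coef_poly ltn_ord K5E.
by case: eqP.
Qed.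

Lemma ReB (a : R) (c : C) : complex.Re ((a%:C)%C - c) = a - complex.Re c.
Proof. by case: c => c1 c2 /=. Qed.

Local Close Scope ring_scope.

Theorem theorem3
  (N m : nat) (HN : (1 <= N)%coq_nat) (Hm : (2 <= m)%coq_nat)
  (Cout : nat -> R) (K6 : nat -> R) (b : nat -> R)
  (nS : nat) (alpha : nat -> nat -> nat -> R) (sigma : nat -> nat)
  (Hsigma : forall k, (sigma k < nS)%coq_nat)
  (Halpha_nonneg : forall q i j, 0 <= alpha q i j)
  (Halpha_noself : forall q i, alpha q i i = 0)
  (Hconn : UJQSC N alpha sigma)
  (Hobs : forall lam, is_eigenvalue m (fun p q => Aint p q + K6 p * Cout q) lam ->
          Cmod lam < 1)
  (Hroots : forall s, bpoly m b s = C0 -> Cmod s < 1)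
  (x z : nat -> nat -> nat -> R) (u : nat -> nat -> R)
  (Hu : forall i k, (i < N)%coq_nat ->
     u i k = dot m (K4 m b) (z i k)
       - / (1 + rsum N (fun j => alpha (sigma k) i j))
         * rsum N (fun j => alpha (sigma k) i j *
                     dot m (K5 m b) (fun p => z i k p - z j k p)))
  (Hx : forall i k p, (i < N)%coq_nat -> (p < m)%coq_nat ->
     x i (S k) p = mv m Aint (x i k) p + Bint m p * u i k)
  (Hz : forall i k p, (i < N)%coq_nat -> (p < m)%coq_nat ->
     z i (S k) p = mv m (fun p q => Aint p q + K6 p * Cout q) (z i k) p
                   + Bint m p * u i k - K6 p * dot m Cout (x i k)) :
  exists xstar : nat -> R,
    forall i p, (i < N)%coq_nat -> (p < m)%coq_nat -> Un_cv (fun k => x i k p) (xstar p).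
Proof.
Local Open Scope ring_scope.
case: m Hm Hobs Hroots Hu Hx Hz => [|m'] Hm Hobs Hroots Hu Hx Hz; first by lia.
have hN : (0 < N)%N by apply/ssrnat.ltP.
pose Mf := fun p q => Aint p q + K6 p * Cout q.
pose e i k p := z i k p - x i k p.
have He : forall i, (i < N)%N -> forall k p, (p < m'.+1)%N ->
    e i k.+1 p = rsum m'.+1 (fun q => Mf p q * e i k q).
  move=> i hi k p hp; rewrite /e Hz ?Hx; try by apply/ssrnat.ltP.
  rewrite rsumE !mvE dotE /Mf; mc.
  have e1 : \sum_(q < m'.+1) (Aint p q + K6 p * Cout q) * (z i k q - x i k q) =
    \sum_(q < m'.+1) Rplus (Aint p q) (Rmult (K6 p) (Cout q)) * z i k q
    - \sum_(q < m'.+1) Aint p q * x i k q - K6 p * \sum_(q < m'.+1) Cout q * x i k q.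
    rewrite mulr_sumr -!sumrB; apply: eq_bigr => q _; mc; ring.
  rewrite e1; ring.
have Esum : forall i p, (i < N)%N -> (p < m'.+1)%N ->
    exists B, forall K, \sum_(k < K) `|e i k p| <= B.
  move=> i p hi hp.
  have hrec := CH_rec m' Mf (e i) (He i hi).
  have hroot : forall w, root (char_poly (MC m' Mf)) w -> nc w < 1.
    move=> w hw; have := Hobs _ (root_char_eig m' Mf w hw); rewrite Cmod_nc toCK.
    by move/RltP; rewrite R1E.
  have hs0 : summ (appP (char_poly (MC m' Mf)) (fun k => ((e i k p)%:C)%C)).
    exists 0 => K; rewrite big1 // => k _; by rewrite hrec // nc0.
  have [B hB] := filt_summ m'.+1 (char_poly (MC m' Mf)) (fun k => ((e i k p)%:C)%C) (size_char_poly _) hroot hs0.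
  exists B => K; have := hB K.
  by under eq_bigr do rewrite ncR.
pose Etot k := \sum_(j < N) \sum_(p < m'.+1) `|e j k p|.
have [BE hBE] : exists B, forall K, \sum_(k < K) Etot k <= B.
  rewrite /Etot; apply: (@summ_sum _ (fun t k => \sum_(p < m'.+1) `|e t k p|)) => j hj.
  apply: (@summ_sum _ (fun p k => `|e j k p|)) => p hp; exact: Esum.
have Etot_ge : forall k j, (j < N)%N -> \sum_(p < m'.+1) `|e j k p| <= Etot k.
  move=> k j hj; apply: (@single_le N (fun j => \sum_(p < m'.+1) `|e j k p|) j) => // t.
  by apply: sumr_ge0 => p _.
have Etot0 : forall k, 0 <= Etot k by move=> k; apply: sumr_ge0 => j _; apply: sumr_ge0.
pose Kmax := \sum_(p < m'.+1) (`|K4 m'.+1 b p| + `|K5 m'.+1 b p|).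
have hK4 : forall p, (p < m'.+1)%N -> `|K4 m'.+1 b p| <= Kmax.
  move=> p hp; apply: le_trans (@single_le m'.+1 (fun p => `|K4 m'.+1 b p| + `|K5 m'.+1 b p|) p _ hp) => /=.
    by rewrite lerDl.
  by move=> j; apply: addr_ge0.
have hK5 : forall p, (p < m'.+1)%N -> `|K5 m'.+1 b p| <= Kmax.
  move=> p hp; apply: le_trans (@single_le m'.+1 (fun p => `|K4 m'.+1 b p| + `|K5 m'.+1 b p|) p _ hp) => /=.
    by rewrite lerDr.
  by move=> j; apply: addr_ge0.
have Kmax0 : 0 <= Kmax by apply: sumr_ge0 => p _; apply: addr_ge0.
pose dd k := 3 * Kmax * Etot k.
have hdd : forall k, 0 <= dd k by move=> k; rewrite /dd; apply: mulr_ge0 => //; apply: mulr_ge0.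
have hBdd : forall n, psum dd n <= 3 * Kmax * BE.
  move=> n; rewrite /psum /dd -mulr_sumr; apply: ler_wpM2l; last exact: hBE.
  by apply: mulr_ge0.
pose xi i k := dot m'.+1 (K5 m'.+1 b) (x i k).
pose a k i j := alpha (sigma k) i j.
have ha0 : forall k i j, 0 <= a k i j by move=> k i j; apply/RleP; apply: Halpha_nonneg.
have hcs : cstep N a xi dd.
  move=> k i hi.
  have hi' : (i < N)%coq_nat by apply/ssrnat.ltP.
  have hxi' : xi i k.+1 = Wb m' b (x i k) + u i k.
    rewrite /xi dotE.
    rewrite (eq_bigr (fun p : 'I_m'.+1 => K5 m'.+1 b p * mv m'.+1 Aint (x i k) p +
                K5 m'.+1 b p * (Bint m'.+1 p * u i k))); last first.
      move=> p _; rewrite Hx //; last by apply/ssrnat.ltP.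
      by mc; rewrite mulrDr.
    by rewrite big_split /= K5_mvA K5_Bint.
  set s := \sum_(j < N) a k i j.
  have s0 : 0 <= s by apply: sumr_ge0 => j _.
  have hu : u i k = dot m'.+1 (K4 m'.+1 b) (z i k) - (1 + s)^-1 *
      \sum_(j < N) a k i j * dot m'.+1 (K5 m'.+1 b) (fun p => z i k p - z j k p).
    by rewrite Hu // !rsumE.
  have havg : avg N a xi k i = (xi i k + \sum_(j < N) a k i j * xi j k) * (1 + s)^-1 by [].
  pose E5 j := dot m'.+1 (K5 m'.+1 b) (e j k).
  have hZ : forall j, dot m'.+1 (K5 m'.+1 b) (z j k) = xi j k + E5 j.
    by move=> j; rewrite /E5 /e dotB /xi; ring.
  have hZZ : forall j, dot m'.+1 (K5 m'.+1 b) (fun p => z i k p - z j k p) =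
      (xi i k + E5 i) - (xi j k + E5 j) by move=> j; rewrite dotB !hZ.
  have hK4z : dot m'.+1 (K4 m'.+1 b) (z i k) = (xi i k + E5 i) - Wb m' b (z i k) by rewrite K4_dot hZ.
  have hK4e : dot m'.+1 (K4 m'.+1 b) (e i k) = E5 i - Wb m' b (e i k) by rewrite K4_dot.
  have hWe : Wb m' b (e i k) = Wb m' b (z i k) - Wb m' b (x i k) by rewrite /e WbB.
  have hsum : \sum_(j < N) a k i j * ((xi i k + E5 i) - (xi j k + E5 j)) =
      s * xi i k - \sum_(j < N) a k i j * xi j k + \sum_(j < N) a k i j * (E5 i - E5 j).
    by rewrite /s mulr_suml -sumrB -big_split /=; apply: eq_bigr => j _; ring.
  have key : xi i k.+1 - avg N a xi k i =
      dot m'.+1 (K4 m'.+1 b) (e i k) - (1 + s)^-1 * \sum_(j < N) a k i j * (E5 i - E5 j).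
    rewrite hxi' hu havg.
    rewrite (eq_bigr (fun j : 'I_N => a k i j * ((xi i k + E5 i) - (xi j k + E5 j)))); last first.
      by move=> j _; rewrite hZZ.
    rewrite hsum hK4z hK4e hWe; field; lra.
  rewrite key.
  have b1 : `|dot m'.+1 (K4 m'.+1 b) (e i k)| <= Kmax * Etot k.
    apply: le_trans (dot_bound _ hK4) _; apply: ler_wpM2l => //; exact: Etot_ge.
  have hE5 : forall j, (j < N)%N -> `|E5 j| <= Kmax * Etot k.
    move=> j hj; apply: le_trans (dot_bound _ hK5) _; apply: ler_wpM2l => //; exact: Etot_ge.
  have b2 : `|(1 + s)^-1 * \sum_(j < N) a k i j * (E5 i - E5 j)| <= 2 * (Kmax * Etot k).
    apply: (@wavg_bound N (a k i) (fun j => E5 i - E5 j)) => //.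
      by apply: mulr_ge0 => //; apply: mulr_ge0.
    move=> j hj; apply: le_trans (ler_normB _ _) _.
    have := hE5 i hi; have := hE5 j hj; lra.
  apply: le_trans (ler_normB _ _) _.
  rewrite /dd; lra.
pose Amax := \sum_(q < nS) \sum_(i < N) \sum_(j < N) alpha q i j.
have ha0' : forall q i j, 0 <= alpha q i j by move=> q i j; apply/RleP; apply: Halpha_nonneg.
have hA0 : forall q i, 0 <= \sum_(j < N) alpha q i j by move=> q i; apply: sumr_ge0 => j _; apply: ha0'.
have hs_le : forall k i, (i < N)%N -> wsum N a k i <= Amax.
  move=> k i hi; rewrite /wsum /a.
  have hq : (sigma k < nS)%N by apply/ssrnat.ltP.
  apply: le_trans (@single_le N (fun i => \sum_(j < N) alpha (sigma k) i j) i _ hi) _ => //.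
  apply: (@single_le nS (fun q => \sum_(i < N) \sum_(j < N) alpha q i j) (sigma k)) => // q.
  by apply: sumr_ge0 => i' _.
have [amin [amin0 hamin]] : exists c, 0 < c /\ forall q, (q < nS)%N ->
    forall i, (i < N)%N -> forall j, (j < N)%N -> 0 < alpha q i j -> c <= alpha q i j.
  apply: fin_lb.
    by move=> t c c' h0 h1 h2 i hi j hj hp; apply: le_trans h1 (h2 i hi j hj hp).
  move=> q hq; apply: fin_lb.
    by move=> t c c' h0 h1 h2 j hj hp; apply: le_trans h1 (h2 j hj hp).
  move=> i hi; apply: fin_lb.
    by move=> t c c' h0 h1 h2 hp; apply: le_trans h1 (h2 hp).
  move=> j hj; case: (boolP (0 < alpha q i j)) => hp.
    by exists (alpha q i j); split => //.
  by exists 1; split => // h; move: hp; rewrite h.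
pose mm := Num.min 1 amin.
have mm0 : 0 < mm by rewrite lt_min ltr01 amin0.
have mm1 : mm <= 1 by rewrite ge_min lexx.
have mma : mm <= amin by rewrite ge_min lexx orbT.
have Amax0 : 0 <= Amax by apply: sumr_ge0 => q _; apply: sumr_ge0 => i _.
pose dl := mm / (1 + Amax).
have hdl1 : forall k i, (i < N)%N -> dl * (1 + wsum N a k i) <= mm.
  move=> k i hi; rewrite /dl mulrAC ler_pdivrMr; last by lra.
  apply: ler_wpM2l; first exact: ltW.
  by have := hs_le k i hi; lra.
have hw : wgood N a dl.
  split.
  - by rewrite /dl divr_gt0 //; lra.
  - rewrite /dl ler_pdivrMr; last by lra.
    by rewrite mul1r; lra.
  - exact: ha0.
  - by move=> k i hi; apply: le_trans (hdl1 k i hi) mm1.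
  - move=> k i j hi hj hp; apply: le_trans (hdl1 k i hi) _.
    apply: le_trans mma _; apply: hamin => //; exact/ssrnat.ltP.
have [M [_ hM]] := Hconn.
have hq : forall k, quasi_strongly_connected N (Ewin a M k).
  move=> k; apply: qsc_mono (hM k) => x0 y0 [l [[h1 h2] hpos]].
  by exists l; split; [split | apply/RltP].
have [Lim hLim] := consensus hN hw hcs hdd hBdd hq.
pose cst := ((Lim%:C)%C / (Pb m' b).[1]).
exists (fun _ => complex.Re cst) => i p hi' hp'.
have hi : (i < N)%N by apply/ssrnat.ltP.
have hp : (p < m'.+1)%N by apply/ssrnat.ltP.
have hx : forall k p, (p < m'.+1)%N -> x i (S k) p = mv m'.+1 Aint (x i k) p + Bint m'.+1 p * u i k.
  by move=> k q hq'; apply: Hx => //; apply/ssrnat.ltP.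
have hsh := shift_x hx.
pose y k := ((x i k 0%N)%:C)%C.
have happ : forall k, appP (Pb m' b) y k = ((xi i k)%:C)%C.
  move=> k; rewrite appP_Pb /xi dotE rmorph_sum; apply: eq_bigr => q _.
  by rewrite rmorphM /= (hsh q k (ltn_ord q)).
have hcv : cvC (appP (Pb m' b) y) ((Lim%:C)%C).
  move=> eps he; have [K HK] := hLim i hi eps he; exists K => k hk.
  by rewrite happ -rmorphB ncR; apply: HK.
have hroot : forall w, root (Pb m' b) w -> nc w < 1.
  move=> w hw0; have : bpoly m'.+1 b (fromC w) = C0.
    by apply: toC_inj; rewrite Pb_horner toCK toC_C0; apply/eqP.
  by move/Hroots; rewrite Cmod_nc toCK => /RltP; rewrite R1E.
have hy := filt_cv m' (Pb m' b) y ((Lim%:C)%C) (size_Pb m' b) hroot hcv.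
apply: cvR_Un => eps he; have [K HK] := hy eps he; exists K => k hk.
rewrite (hsh p k hp).
apply: le_lt_trans (HK (k + p)%N _); last by apply: leq_trans hk (leq_addr _ _).
apply: le_trans (nc_Re _); rewrite /y ReB.
by [].
Qed.
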